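(* Let $\vec{\alpha}=\langle \alpha_s : s\in[\mathbb{N}]^{<\infty}\rangle$ be a sequence of nonstandard hypernatural numbers. For every $\mathcal{X}\subseteq[\mathbb{N}]^{\infty}$ and every $\vec{\alpha}$-tree $T$ there exists an $\vec{\alpha}$-tree $S\subseteq T$ with $st(S)=st(T)$ such that one of the following holds: (1) $[S]\subseteq\mathcal{X}$; (2) $[S]\cap\mathcal{X}=\emptyset$; (3) for every $\vec{\alpha}$-tree $S'$ with $S'\subseteq S$, both $[S']\not\subseteq\mathcal{X}$ and $[S']\cap\mathcal{X}\neq\emptyset$.
   Context: Setting (Alpha-Theory of Benci–Di Nasso): one works in ZFC together with a new symbol $\alpha$ satisfying: ($\alpha$1) every sequence $\varphi=\langle\varphi_i:i\in\mathbb{N}\rangle$ has a unique ''ideal value'' $\varphi[\alpha]$; ($\alpha$2) if $\varphi[\alpha]=\psi[\alpha]$ and $f$ is a function such that $f\circ\varphi$ and $f\circ\psi$ make sense, then $(f\circ\varphi)[\alpha]=(f\circ\psi)[\alpha]$; ($\alpha$3) for $r\in\mathbb{R}$ the constant sequence with value $r$ has ideal value $r$, and the sequence $\psi_i=i$ has ideal value $\alpha\notin\mathbb{N}$; ($\alpha$4) if $\vartheta_i=\{\varphi_i,\psi_i\}$ for all $i$ then $\vartheta[\alpha]=\{\varphi[\alpha],\psi[\alpha]\}$; ($\alpha$5) the constant sequence $\emptyset$ has ideal value $\emptyset$, and if every $\psi_i$ is a nonempty set then $\psi[\alpha]=\{\vartheta[\alpha]:\vartheta_i\in\psi_i\text{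 for all }i\}$. For a set $A$, ${}^*A$ denotes the ideal value of the constant sequence with value $A$; relations and operations are transformed the same way and the $*$ is dropped on them (e.g. $<$, $\cup$). ${}^*\mathbb{N}$ is the set of hypernatural numbers; elements of ${}^*\mathbb{N}\setminus\mathbb{N}$ are nonstandard hypernatural numbers. Notation: $[X]^{<\infty}$, $[X]^{\infty}$ are the finite, resp. infinite, subsets of $X\subseteq\mathbb{N}$. For finite $s$ and $X\subseteq\mathbb{N}$, $s\sqsubseteq X$ means $s=\{j\in X:j\le i\}$ for some $i\in\mathbb{N}$. A tree on $\mathbb{N}$ is a nonempty $T\subseteq[\mathbb{N}]^{<\infty}$ such that $s\sqsubseteq t\in T$ implies $s\in T$. $[T]=\{X\in[\mathbb{N}]^\infty:$ every finite $s\sqsubseteq X$ lies in $T\}$. The stem $st(T)$ of $T$, if it exists, is the $\sqsubseteq$-maximal $s\in T$ which is $\sqsubseteq$-comparable with every element of $T$; $T/s=\{t\in T:s\sqsubseteq t\}$. An $\vec{\alpha}$-tree is a tree $T$ on $\mathbb{N}$ with a stem $st(T)$ such that $T/st(T)\neq\emptyset$ and for all $s\in T/st(T)$, $s\cup\{\alpha_s\}\in{}^*T$. *)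

(* Defs.v *)
From mathcomp Require Import all_boot.
From mathcomp Require Import finmap.
From mathcomp Require Import boolp classical_sets cardinality.

Set Implicit Arguments.
Unset Strict Implicit.
Unset Printing Implicit Defensive.

Local Open Scope fset_scope.
Local Open Scope classical_set_scope.

(* Alpha-Theory is modelled by its ultrafilter:  U = { A | alpha \in *A }.
   A hypernatural number is the ideal value of a sequence of naturals
   (represented by the sequence), and membership statements transfer:
   phi[alpha] \in *A  <->  U [set i | phi i \in A]. *)
Definition nonprincipal_ultrafilter (U : set (set nat)) : Prop :=
  [/\ U setT /\ ~ U set0,
      (forall A B, A `<=` B -> U A -> U B),
      (forall A B, U A -> U B -> U (A `&` B)),
      (forall A, U A \/ U (~` A))
    & (forall n : nat, ~ U [set n])].

(* a sequence phi represents a nonstandard hypernatural: phi[alpha] <> n for all n *)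
Definition nonstandard (U : set (set nat)) (phi : nat -> nat) : Prop :=
  forall n : nat, U [set i | phi i <> n].

Definition init_seg (s : {fset nat}) (X : set nat) : Prop :=
  exists i : nat, forall j : nat, (j \in s) <-> (X j /\ (j < i)%N).

Definition fsset (t : {fset nat}) : set nat := [set j | j \in t].

Definition fsqsub (s t : {fset nat}) : Prop := init_seg s (fsset t).

Definition is_tree (T : set {fset nat}) : Prop :=
  (exists t, T t) /\ (forall s t, fsqsub s t -> T t -> T s).

Definition infinite_subset (X : set nat) : Prop := ~ finite_set X.

Definition body (T : set {fset nat}) : set (set nat) :=
  [set X | infinite_subset X /\ (forall s, init_seg s X -> T s)].

Definition comparable_all (T : set {fset nat}) (s : {fset nat}) : Prop :=
  forall t, T t -> fsqsub s t \/ fsqsub t s.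

Definition is_stem (T : set {fset nat}) (st : {fset nat}) : Prop :=
  [/\ T st, comparable_all T st &
      forall s', T s' -> comparable_all T s' -> fsqsub st s' -> s' = st].

Definition tree_above (T : set {fset nat}) (s : {fset nat}) : set {fset nat} :=
  [set t | T t /\ fsqsub s t].

(* alpha-tree, for alpha_s represented by the sequence (alpha s) *)
Definition alpha_tree (U : set (set nat)) (alpha : {fset nat} -> nat -> nat)
  (T : set {fset nat}) : Prop :=
  is_tree T /\
  exists st, [/\ is_stem T st, tree_above T st !=set0 &
    forall s, tree_above T st s -> U [set i | T (s `|` [fset alpha s i])%fset]].

(* Main.v *)
Require Import Defs.
From mathcomp Require Import all_boot.
From mathcomp Require Import finmap.
From mathcomp Require Import boolp classical_sets cardinality.
Local Open Scope classical_set_scope.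

Lemma sub_of {s t x} : fsqsub s t -> x \in s -> x \in t.
Proof. by case=> i H /H [] . Qed.

Lemma init_trans {s t X} : fsqsub s t -> init_seg t X -> init_seg s X.
Proof.
case=> i Hi [k Hk]; exists (minn i k) => j; rewrite leq_min; split.
  by move=> /Hi [/Hk [? ?] ?]; split=> //; apply/andP.
by case=> Xj /andP[h1 h2]; apply/Hi; split=> //; apply/Hk.
Qed.

Lemma fsqsub_trans {s t u} : fsqsub s t -> fsqsub t u -> fsqsub s u.
Proof. exact: init_trans. Qed.

Lemma init_comp {s t X} : init_seg s X -> init_seg t X -> fsqsub s t \/ fsqsub t s.
Proof.
case=> i Hi [k Hk]; case: (leqP i k) => hik.
  left; exists i => j; split.
    by move=> /Hi [? ?]; split=> //; apply/Hk; split=> //; apply: leq_trans hik.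
  by case=> /Hk [? ?] ?; apply/Hi.
right; exists k => j; split.
  by move=> /Hk [? ?]; split=> //; apply/Hi; split=> //; apply: leq_trans (ltnW hik).
by case=> /Hi [? ?] ?; apply/Hk.
Qed.

Lemma fs_bound (s : {fset nat}) : exists m, forall x, x \in s -> (x < m)%N.
Proof.
exists (\sum_(x <- s) x).+1 => x hx; rewrite ltnS.
rewrite (big_rem x hx) /=; exact: leq_addr.
Qed.

Lemma fsqsub_refl s : fsqsub s s.
Proof.
have [m hm] := fs_bound s; exists m => j; rewrite /fsset /=.
by split=> [h|[]//]; split=> //; apply: hm.
Qed.

Lemma fsqsub_antisym {s t} : fsqsub s t -> fsqsub t s -> s = t.
Proof.
move=> h1 h2; apply/fsetP => x; apply/idP/idP; [exact: sub_of|exact: sub_of].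
Qed.

Lemma fsqsub_ext {s a} : (forall x, x \in s -> (x < a)%N) -> fsqsub s (s `|` [fset a])%fset.
Proof.
move=> ha; exists a => j; rewrite /fsset /= in_fsetU in_fset1; split.
  by move=> h; rewrite h; split=> //; apply: ha.
by case=> /orP[//| /eqP ->]; rewrite ltnn.
Qed.

Lemma ext_unique {s a b v} : (forall x, x \in s -> (x < a)%N) ->
  (forall x, x \in s -> (x < b)%N) ->
  fsqsub (s `|` [fset a])%fset v -> fsqsub (s `|` [fset b])%fset v -> a = b.
Proof.
move=> ha hb hav hbv.
have ina : a \in v by apply: (sub_of hav); rewrite in_fsetU in_fset1 eqxx orbT.
have inb : b \in v by apply: (sub_of hbv); rewrite in_fsetU in_fset1 eqxx orbT.
case: (ltngtP a b) => // hab.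
- case: hbv => i Hi.
  have [_ bi] : fsset v b /\ (b < i)%N by apply/Hi; rewrite in_fsetU in_fset1 eqxx orbT.
  have : a \in (s `|` [fset b])%fset by apply/Hi; split; [exact: ina | apply: ltn_trans bi].
  rewrite in_fsetU in_fset1 => /orP[/ha|/eqP e]; first by rewrite ltnn.
  by move: hab; rewrite e ltnn.
- case: hav => i Hi.
  have [_ ai] : fsset v a /\ (a < i)%N by apply/Hi; rewrite in_fsetU in_fset1 eqxx orbT.
  have : b \in (s `|` [fset a])%fset by apply/Hi; split; [exact: inb | apply: ltn_trans ai].
  rewrite in_fsetU in_fset1 => /orP[/hb|/eqP e]; first by rewrite ltnn.
  by move: hab; rewrite e ltnn.
Qed.

Lemma between {s u a} : fsqsub s u -> fsqsub u (s `|` [fset a])%fset ->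
  u = s \/ u = (s `|` [fset a])%fset.
Proof.
move=> h1 h2; case: (boolP (a \in u)) => ha; [right|left];
  apply/fsetP => x; apply/idP/idP => hx.
- exact: sub_of h2 hx.
- by move: hx; rewrite in_fsetU in_fset1 => /orP[/(sub_of h1)|/eqP ->].
- have := sub_of h2 hx; rewrite in_fsetU in_fset1 => /orP[//|/eqP e].
  by move: ha; rewrite -e hx.
- exact: sub_of h1 hx.
Qed.

Lemma above_child {s t a} : (forall x, x \in s -> (x < a)%N) ->
  fsqsub t (s `|` [fset a])%fset \/ fsqsub (s `|` [fset a])%fset t ->
  fsqsub s t -> t <> s -> fsqsub (s `|` [fset a])%fset t.
Proof.
move=> ha [h|//] hst hne.
by case: (between hst h) => // ->; apply: fsqsub_refl.
Qed.

Lemma U_mono {U A B} : nonprincipal_ultrafilter U -> A `<=` B -> U A -> U B.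
Proof. by case=> _ h _ _ _; apply: h. Qed.

Lemma U_int {U A B} : nonprincipal_ultrafilter U -> U A -> U B -> U (A `&` B).
Proof. by case=> _ _ h _ _; apply: h. Qed.

Lemma U_ex {U A} : nonprincipal_ultrafilter U -> U A -> exists x, A x.
Proof.
move=> HU hA; apply: contrapT => hne; case: HU => [[_ h0]] hm _ _ _.
by apply: h0; apply: hm hA => x Ax; apply: hne; exists x.
Qed.

Lemma U_ge {U phi} : nonprincipal_ultrafilter U -> nonstandard U phi ->
  forall m, U [set i | (m <= phi i)%N].
Proof.
move=> HU hphi; elim=> [|m IH].
  by case: (HU) => [[hT _]] hm _ _ _; apply: hm hT.
apply: U_mono HU _ (U_int HU IH (hphi m)) => i [/= h1 h2].
by rewrite ltn_neqAle h1 andbT; apply/eqP => e; apply: h2.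
Qed.

Lemma U_above {U} {phi : nat -> nat} (s : {fset nat}) : nonprincipal_ultrafilter U ->
  nonstandard U phi -> U [set i | forall x, x \in s -> (x < phi i)%N].
Proof.
move=> HU hphi; have [m hm] := fs_bound s.
apply: U_mono HU _ (U_ge HU hphi m) => i /= hi x /hm xm.
exact: leq_trans xm hi.
Qed.

Lemma two_distinct {U} {P : set nat} {phi} : nonprincipal_ultrafilter U -> U P ->
  nonstandard U phi -> exists i j, [/\ P i, P j & phi i <> phi j].
Proof.
move=> HU hP hphi; have [i Pi] := U_ex HU hP.
have [j [Pj hj]] := U_ex HU (U_int HU hP (hphi (phi i))).
by exists i, j; split=> // e; apply: hj.
Qed.

Lemma infinite_above {Y} : infinite_subset Y -> forall m, exists j, Y j /\ (m <= j)%N.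
Proof.
move=> hY m; apply: contrapT => hne; apply: hY.
apply: (sub_finite_set _ (finite_II m)) => j Yj /=.
by rewrite ltnNge; apply/negP => hmj; apply: hne; exists j.
Qed.

Lemma init_exists (Y : set nat) k : exists u : {fset nat},
  forall j, j \in u <-> Y j /\ (j < k)%N.
Proof.
elim: k => [|k [u hu]].
  by exists fset0 => j; rewrite in_fset0; split=> // [[]].
case: (pselect (Y k)) => hk.
- exists (u `|` [fset k])%fset => j; rewrite in_fsetU in_fset1 ltnS leq_eqVlt.
  split.
    case/orP => [/hu [Yj jk]|/eqP ->]; split=> //; first by rewrite jk orbT.
    by rewrite eqxx.
  case=> Yj /orP[/eqP ->|jk]; first by rewrite eqxx orbT.
  by have -> : j \in u by apply/hu.
- exists u => j; rewrite ltnS leq_eqVlt; split.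
    by move=> /hu [Yj jk]; split=> //; rewrite jk orbT.
  case=> Yj /orP[/eqP e|h]; first by move: hk; rewrite -e.
  exact/hu.
Qed.

Lemma stem_unique S s1 s2 : is_stem S s1 -> is_stem S s2 -> s1 = s2.
Proof.
case=> h1 c1 m1 [h2 c2 m2]; case: (c1 _ h2) => h.
  by apply/esym/m1.
by apply: m2.
Qed.

Lemma stem_lemma W s : W s -> (forall t, W t -> fsqsub s t \/ fsqsub t s) ->
  (exists a b, [/\ a <> b, forall x, x \in s -> (x < a)%N,
     forall x, x \in s -> (x < b)%N, W (s `|` [fset a])%fset & W (s `|` [fset b])%fset]) ->
  is_stem W s.
Proof.
move=> Ws hc [a [b [hab ha hb Wa Wb]]]; split=> // s' Ws' hs' hss'.
apply: contrapT => hne.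
have h1 := above_child ha (hs' _ Wa) hss' hne.
have h2 := above_child hb (hs' _ Wb) hss' hne.
by apply: hab; apply: ext_unique ha hb h1 h2.
Qed.

Definition good (U : set (set nat)) (alpha : {fset nat} -> nat -> nat)
  (T : set {fset nat}) (Q : set nat -> Prop) (s : {fset nat}) : Prop :=
  exists S : set {fset nat}, [/\ is_tree S, is_stem S s,
    (forall t, tree_above S s t -> U [set i | S (t `|` [fset alpha t i])%fset]),
    S `<=` T & (forall Y, body S Y -> Q Y)].

Lemma union_good {U alpha T Q s} : nonprincipal_ultrafilter U ->
  (forall s, nonstandard U (alpha s)) -> is_tree T -> T s ->
  U [set i | (forall x, x \in s -> (x < alpha s i)%N) /\
             good U alpha T Q (s `|` [fset alpha s i])%fset] ->
  good U alpha T Q s.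
Proof.
move=> HU Ha [_ Tdown] Ts hU.
pose P' a := (forall x, x \in s -> (x < a)%N) /\ good U alpha T Q (s `|` [fset a])%fset.
pose R a (S : set {fset nat}) := P' a ->
    [/\ is_tree S, is_stem S (s `|` [fset a])%fset,
    (forall t, tree_above S (s `|` [fset a])%fset t ->
        U [set i | S (t `|` [fset alpha t i])%fset]),
    S `<=` T & (forall Y, body S Y -> Q Y)].
have hex : forall a, exists S, R a S.
  move=> a; case: (pselect (P' a)) => [[_ [S hS]]|hn].
    by exists S => _.
  by exists set0 => /hn.
have [Sf hS] := choice hex.
pose W := [set t | fsqsub t s \/ exists a, P' a /\ Sf a t].
have Wcomp : forall t, W t -> fsqsub s t \/ fsqsub t s.
  move=> t [h|[a [Pa Sat]]]; first by right.
  have [_ [_ c1 _] _ _ _] := hS a Pa.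
  case: (c1 _ Sat) => h.
    by left; apply: fsqsub_trans (fsqsub_ext Pa.1) h.
  exact: init_comp (fsqsub_ext Pa.1) h.
have Ws : W s by left; apply: fsqsub_refl.
have Wchild : forall a, P' a -> W (s `|` [fset a])%fset.
  move=> a Pa; right; exists a; split=> //.
  by have [_ [? _ _] _ _ _] := hS a Pa.
have Wtree : is_tree W.
  split; first by exists s.
  move=> s0 t h0 [h|[a [Pa Sat]]].
    by left; apply: fsqsub_trans h0 h.
  right; exists a; split=> //.
  have [[_ d] _ _ _ _] := hS a Pa; exact: d h0 Sat.
exists W; split=> //.
- apply: stem_lemma => //.
  have [i [j [[hi gi] [hj gj] hij]]] := two_distinct HU hU (Ha s).
  exists (alpha s i), (alpha s j); split=> //.
    by apply: Wchild.
  by apply: Wchild.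
- move=> t [Wt hst]; case: (eqVneq t s) => [->|hne].
    apply: U_mono HU _ hU => i [hi gi] /=; exact: Wchild.
  case: Wt => [h|[a [Pa Sat]]].
    by case/eqP: hne; apply: fsqsub_antisym h hst.
  have [_ [_ c1 _] al _ _] := hS a Pa.
  have h := above_child Pa.1 (proj1 (or_comm _ _) (c1 _ Sat)) hst (elimN eqP hne).
  apply: U_mono HU _ (al t (conj Sat h)) => i /= hi.
  by right; exists a.
- move=> t [h|[a [Pa Sat]]]; first exact: Tdown h Ts.
  by have [_ _ _ sub _] := hS a Pa; apply: sub.
- move=> Y [hY hYW].
  have [m hm] := fs_bound s.
  have [j [Yj mj]] := infinite_above hY m.
  have [u hu] := init_exists Y j.+1.
  have inu : init_seg u Y by exists j.+1.
  have ju : j \in u by apply/hu; split.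
  have notsub : forall v, fsqsub u v -> ~ fsqsub v s.
    move=> v huv hvs; have := hm _ (sub_of hvs (sub_of huv ju)).
    by rewrite ltnNge mj.
  have Wu := hYW u inu.
  have hsu : fsqsub s u.
    by case: (Wcomp u Wu) => // h; case: (notsub u (fsqsub_refl u) h).
  have hnu : u <> s by move=> e; apply: (notsub u (fsqsub_refl u)); rewrite e; apply: fsqsub_refl.
  case: Wu => [h|[a [Pa Sau]]]; first by case: (notsub u (fsqsub_refl u) h).
  have [_ [_ c1 _] _ _ bd] := hS a Pa.
  have hau := above_child Pa.1 (proj1 (or_comm _ _) (c1 _ Sau)) hsu hnu.
  apply: bd; split=> // v hv.
  have [[_ Sdown] _ _ _ _] := hS a Pa.
  case: (init_comp hv inu) => hvu; first exact: Sdown hvu Sau.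
  case: (hYW v hv) => [h|[b [Pb Sbv]]]; first by case: (notsub v hvu h).
  have [_ [_ c2 _] _ _ _] := hS b Pb.
  have hsv := fsqsub_trans hsu hvu.
  have hnv : v <> s by move=> e; apply: (notsub v hvu); rewrite e; apply: fsqsub_refl.
  have hbv := above_child Pb.1 (proj1 (or_comm _ _) (c2 _ Sbv)) hsv hnv.
  have hav := fsqsub_trans hau hvu.
  by rewrite (ext_unique Pa.1 Pb.1 hav hbv).
Qed.

Theorem mainTheorem1 (U : set (set nat)) (HU : nonprincipal_ultrafilter U)
  (alpha : {fset nat} -> nat -> nat)
  (Halpha : forall s : {fset nat}, nonstandard U (alpha s))
  (calX : set (set nat)) (HX : calX `<=` infinite_subset)
  (T : set {fset nat}) (HT : alpha_tree U alpha T) :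
  exists S : set {fset nat},
    [/\ alpha_tree U alpha S, S `<=` T,
        (exists st, is_stem S st /\ is_stem T st) &
        [\/ body S `<=` calX,
            body S `&` calX = set0 |
            forall S' : set {fset nat}, alpha_tree U alpha S' -> S' `<=` S ->
              ~ (body S' `<=` calX) /\ body S' `&` calX !=set0 ]].
Proof.
case: HT => [[Tne Tdown] [st [Tstem _ Tal]]].
have Tst : T st by case: Tstem.
pose B u := good U alpha T calX u \/ good U alpha T (~` calX) u.
have mk : forall S, is_tree S -> is_stem S st ->
    (forall t, tree_above S st t -> U [set i | S (t `|` [fset alpha t i])%fset]) ->
    alpha_tree U alpha S.
  move=> S Str Sst Sal; split=> //; exists st; split=> //.
  by exists st; split; [case: Sst|apply: fsqsub_refl].
case: (pselect (B st)) => [[[S [Str Sst Sal Sub Sbd]]|[S [Str Sst Sal Sub Sbd]]]|nB].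
- exists S; split=> //; first exact: mk.
    by exists st.
  by apply: Or31.
- exists S; split=> //; first exact: mk.
    by exists st.
  by apply: Or32; rewrite -subset0 => Y [bY XY]; apply: (Sbd _ bY XY).
pose S := [set t | T t /\ (fsqsub st t \/ fsqsub t st) /\
                   (forall u, fsqsub st u -> fsqsub u t -> ~ B u)].
case: (HU) => _ _ _ Uc _.
have Skey : forall t, S t -> fsqsub st t -> U [set i | S (t `|` [fset alpha t i])%fset].
  move=> t [Tt [_ Sh]] hst; have nBt := Sh t hst (fsqsub_refl t).
  case: (Uc [set i | S (t `|` [fset alpha t i])%fset]) => // hc; exfalso.
  have hC := Tal t (conj Tt hst).
  have hD := U_above t HU (Halpha t).
  have hBc : U [set i | (forall x, x \in t -> (x < alpha t i)%N) /\
                        B (t `|` [fset alpha t i])%fset].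
    apply: (U_mono HU _ (U_int HU (U_int HU hc hC) hD)) => i /= [[nS Tc] hx].
    split=> //; apply: contrapT => nBc; apply: nS; split=> //; split.
      by left; apply: fsqsub_trans hst (fsqsub_ext hx).
    move=> u hu huc; case: (init_comp huc (fsqsub_ext hx)) => h.
      exact: Sh u hu h.
    by case: (between h huc) => ->.
  case: (Uc [set i | (forall x, x \in t -> (x < alpha t i)%N) /\
                     good U alpha T calX (t `|` [fset alpha t i])%fset]) => hg.
    by apply: nBt; left; apply: (union_good HU Halpha (conj Tne Tdown) Tt hg).
  apply: nBt; right; apply: (union_good HU Halpha (conj Tne Tdown) Tt).
  apply: (U_mono HU _ (U_int HU hBc hg)) => i /= [[hx [g|g]] ng]; split=> //.
  by exfalso; apply: ng.
have Sst : S st.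
  split=> //; split; first by left; apply: fsqsub_refl.
  by move=> u h1 h2; rewrite (fsqsub_antisym h2 h1).
have Stree : is_tree S.
  split; first by exists st.
  move=> s0 t h0 [Tt [hc Sh]]; split; first exact: Tdown h0 Tt.
  split.
    case: hc => h.
      by case: (init_comp h0 h) => h'; [right|left].
    by right; apply: fsqsub_trans h0 h.
  by move=> u h1 h2; apply: Sh h1 (fsqsub_trans h2 h0).
have Sstem : is_stem S st.
  apply: stem_lemma => //; first by move=> t [_ []].
  have hU2 := U_int HU (Skey st Sst (fsqsub_refl st)) (U_above st HU (Halpha st)).
  have [i [j [[Si hi] [Sj hj] hij]]] := two_distinct HU hU2 (Halpha st).
  by exists (alpha st i), (alpha st j); split.
exists S; split.
- apply: mk => // t [St hst]; exact: Skey.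
- by move=> t [].
- by exists st.
apply: Or33 => S' [S'tree [s' [S's _ S'al]]] hsub.
have S's0 : S' s' by case: S's.
have s'S : S s' := hsub _ S's0.
have hss' : fsqsub st s'.
  case: (s'S) => _ [[//|h] _].
  case: (eqVneq s' st) => [->|hne]; first exact: fsqsub_refl.
  have hU2 := U_int HU (S'al s' (conj S's0 (fsqsub_refl s'))) (U_above s' HU (Halpha s')).
  have [i [j [[Si hi] [Sj hj] hij]]] := two_distinct HU hU2 (Halpha s').
  have below : forall a, (forall x, x \in s' -> (x < a)%N) -> S' (s' `|` [fset a])%fset ->
      fsqsub (s' `|` [fset a])%fset st.
    move=> a ha Sa; case: (hsub _ Sa) => _ [[h'|//] _].
    case: (between h h') => e; first by case/eqP: hne.
    by rewrite -e; apply: fsqsub_refl.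
  by case: hij; apply: ext_unique hi hj (below _ hi Si) (below _ hj Sj).
have nBs' : ~ B s' by case: s'S => _ [_ Sh]; apply: Sh hss' (fsqsub_refl s').
have S'T : S' `<=` T by move=> t /hsub [].
split.
  by move=> hsubX; apply: nBs'; left; exists S'; split.
apply: contrapT => hne; apply: nBs'; right; exists S'; split=> // Y bY XY.
by apply: hne; exists Y.
Qed.
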